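(* Let $\mathcal{C}$ be a completion-post-effective and $\infty$-completion-effective class of very-WSTS. Then for every $\mathcal{S}=(X,\xrightarrow{\Sigma},\le)\in\mathcal{C}$ and every $x\in X$, the ideal decomposition of $\downarrow\mathrm{Post}^*(x)$ can be computed. In particular, the coverability problem for $\mathcal{C}$ is decidable.
   Context: A (labeled, ordered) transition system is $\mathcal{S}=(X,\xrightarrow{\Sigma},\le)$: $X$ a set, $\Sigma$ finite, $\xrightarrow{a}\subseteq X\times X$ for $a\in\Sigma$, $\le$ a quasi-ordering; relations extend to words. $\mathrm{Post}(x,w)=\{y:x\xrightarrow{w}y\}$, $\mathrm{Post}^*(x)=\bigcup_{w\in\Sigma^*}\mathrm{Post}(x,w)$, extended to sets by union; $\downarrow D=\{x:\exists y\in D,\ x\le y\}$. WSTS: $\le$ wqo and monotone ($x\xrightarrow{a}y$, $x'\ge x$ imply $x'\xrightarrow{w}y'\ge y$ for some $w$). Strong monotonicity: $x\xrightarrow{a}y$, $x'\ge x$ imply $x'\xrightarrow{a}y'$ for some $y'\ge y$; strong-strict: additionally $x'>x$ yields such $y'>y$. Deterministic: at most one $a$-successor. Ideal: nonempty downward-closed directed subset; $\mathrm{Idl}(X)$ the set of ideals. Ideal decomposition of downward-closed $D$ (in a wqo): the finite set of $\subseteq$-maximal ideals included in $D$; $D$ is their union. Completion $\widehat{\mathcal{S}}=(\mathrm{Idl}(X),\Rightarrow_\Sigma,\subseteq)$ with $I\xRightarrow{a}J$ iff $J$ is in the ideal decomposition of $\downarrow\mathrm{Post}(I,a)$. If deterministic,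 $w(I)$ is the unique $J$ with $I\xRightarrow{w}J$. For $w\in\Sigma^+$: $w^\infty(I)=\bigcup_kw^k(I)$ if $I\subset w(I)$, else $I$. Levels: $\mathrm{Idl}_0(X)=\mathrm{Idl}(X)$, $\mathrm{Idl}_n(X)$ = set of unions of strictly increasing sequences in $\mathrm{Idl}_{n-1}(X)$; finitely many levels if some $\mathrm{Idl}_n(X)=\emptyset$. A very-WSTS is a WSTS with strong monotonicity whose completion is a deterministic WSTS ($\subseteq$ a wqo on ideals, monotone) with strong-strict monotonicity, and $\mathrm{Idl}(X)$ has finitely many levels. A class of WSTS is completion-post-effective if (1) ideals can be effectively represented and manipulated, (2) inclusion of ideals is decidable, and (3) the successors of an ideal in the completion, $\{J: I\xRightarrow{a}J\}$, are computable for every ideal $I$ and $a$. It is $\infty$-completion-effective if $w^\infty(I)$ is computable for every ideal $I$ and word $w$. Coverability problem: given $\mathcal{S}$ and $x,y\in X$, decide whether there is $z\ge y$ with $z\in\mathrm{Post}^*(x)$. *)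

(* Defs.v *)
(* Computability is modelled by uniform oracle
   programs: coinductive query/answer trees that are parametric in the type of
   ideal codes, run against the oracle operations of an effective class. *)
From mathcomp Require Import all_boot.
Set Implicit Arguments. Unset Strict Implicit. Unset Printing Implicit Defensive.

Definition pset (X : Type) := X -> Prop.

(* list membership (no decidable equality needed) *)
Fixpoint inlist {T : Type} (x : T) (s : seq T) : Prop :=
  match s with [::] => False | y :: s' => y = x \/ inlist x s' end.
Definition sub {X} (A B : pset X) := forall x, A x -> B x.
Definition seteq {X} (A B : pset X) := forall x, A x <-> B x.
Definition strict {X} (A B : pset X) := sub A B /\ ~ sub B A.

Definition wqo_on {T} (P : T -> Prop) (r : T -> T -> Prop) :=
  (forall x, P x -> r x x) /\
  (forall x y z, P x -> P y -> P z -> r x y -> r y z -> r x z) /\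
  (forall f : nat -> T, (forall k, P (f k)) -> exists i j, (i < j)%N /\ r (f i) (f j)).

Section TS.
Variables (X : Type) (Sig : finType) (step : Sig -> X -> X -> Prop)
          (le : X -> X -> Prop).

Fixpoint stepw (w : seq Sig) (x y : X) : Prop :=
  match w with
  | [::] => x = y
  | a :: w' => exists z, step a x z /\ stepw w' z y
  end.

Definition reach (x : X) : pset X := fun y => exists w, stepw w x y.
Definition post (I : pset X) (a : Sig) : pset X := fun y => exists x, I x /\ step a x y.
Definition dc (D : pset X) : pset X := fun x => exists y, D y /\ le x y.

Definition down_closed (D : pset X) := forall x y, D y -> le x y -> D x.
Definition directed (D : pset X) :=
  forall x y, D x -> D y -> exists z, D z /\ le x z /\ le y z.
Definition ideal (I : pset X) := (exists x, I x) /\ down_closed I /\ directed I.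

Definition in_idecomp (D : pset X) (I : pset X) :=
  ideal I /\ sub I D /\ (forall J, ideal J -> sub I J -> sub J D -> sub J I).

Definition cstep (a : Sig) (I J : pset X) := ideal I /\ in_idecomp (dc (post I a)) J.
Fixpoint cstepw (w : seq Sig) (I J : pset X) : Prop :=
  match w with
  | [::] => seteq I J
  | a :: w' => exists K, cstep a I K /\ cstepw w' K J
  end.

Definition winf (w : seq Sig) (I K : pset X) :=
  let grows := exists J, cstepw w I J /\ strict I J in
  (grows -> seteq K (fun x => exists k J, cstepw (flatten (nseq k w)) I J /\ J x)) /\
  (~ grows -> seteq K I).

Fixpoint level (n : nat) : pset X -> Prop :=
  match n with
  | 0 => ideal
  | n'.+1 => fun I => exists f : nat -> pset X,
       (forall k, level n' (f k)) /\ (forall k, strict (f k) (f k.+1)) /\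
       seteq I (fun x => exists k, f k x)
  end.

Definition very_wsts :=
  wqo_on (fun _ => True) le /\
  (forall a x y x', step a x y -> le x x' -> exists w y', stepw w x' y' /\ le y y') /\
  (forall a x y x', step a x y -> le x x' -> exists y', step a x' y' /\ le y y') /\
  (forall a I J1 J2, cstep a I J1 -> cstep a I J2 -> seteq J1 J2) /\
  wqo_on ideal sub /\
  (forall a I J I', cstep a I J -> ideal I' -> sub I I' ->
     exists w J', cstepw w I' J' /\ sub J J') /\
  (forall a I J I', cstep a I J -> ideal I' -> sub I I' ->
     exists J', cstep a I' J' /\ sub J J') /\
  (forall a I J I', cstep a I J -> ideal I' -> strict I I' ->
     exists J', cstep a I' J' /\ strict J J') /\
  (exists n, forall I, ~ level n I).

(* effective representation of ideals by codes of type C, with the oracle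
   operations of a completion-post-effective, infty-completion-effective class *)
Record effective (C : Type) := Effective {
  den : C -> pset X;
  den_ideal : forall c, ideal (den c);
  den_onto : forall I, ideal I -> exists c, seteq (den c) I;
  incl : C -> C -> bool;
  inclP : forall c d, incl c d = true <-> sub (den c) (den d);
  succ : C -> Sig -> seq C;
  succ_sound : forall c a d, inlist d (succ c a) -> cstep a (den c) (den d);
  succ_complete : forall c a J, cstep a (den c) J ->
                    exists d, inlist d (succ c a) /\ seteq (den d) J;
  accel : C -> seq Sig -> C;
  accelP : forall c w, w <> [::] -> winf w (den c) (den (accel c w))
}.

End TS.

CoInductive prog (Sig C R : Type) : Type :=
| Ret (r : R)
| AskIncl (c d : C) (k : bool -> prog Sig C R)
| AskSucc (c : C) (a : Sig) (k : seq C -> prog Sig C R)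
| AskAccel (c : C) (w : seq Sig) (k : C -> prog Sig C R).

Arguments Ret {Sig C R}.
Arguments AskIncl {Sig C R}.
Arguments AskSucc {Sig C R}.
Arguments AskAccel {Sig C R}.

Inductive runs {Sig C R : Type} (incl : C -> C -> bool) (succ : C -> Sig -> seq C)
    (accel : C -> seq Sig -> C) : prog Sig C R -> R -> Prop :=
| runs_ret r : runs incl succ accel (Ret r) r
| runs_incl c d k r : runs incl succ accel (k (incl c d)) r ->
                      runs incl succ accel (AskIncl c d k) r
| runs_succ c a k r : runs incl succ accel (k (succ c a)) r ->
                      runs incl succ accel (AskSucc c a k) r
| runs_accel c w k r : runs incl succ accel (k (accel c w)) r ->
                       runs incl succ accel (AskAccel c w k) r.

Definition codes_idecomp {X C : Type} (le : X -> X -> Prop) (den : C -> pset X)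
    (D : pset X) (r : seq C) :=
  (forall d, inlist d r -> in_idecomp le D (den d)) /\
  (forall I, in_idecomp le D I -> exists d, inlist d r /\ seteq (den d) I).

(* Main.v *)
Require Import Defs.
From mathcomp Require Import all_boot.
From Stdlib Require Import Classical ClassicalEpsilon.
Set Implicit Arguments. Unset Strict Implicit. Unset Printing Implicit Defensive.

Lemma inlist_cat {T} (x : T) s1 s2 : inlist x (s1 ++ s2) <-> inlist x s1 \/ inlist x s2.
Proof. elim: s1 => [|y s IH] /=; first by tauto. rewrite IH; tauto. Qed.

Lemma inlist_map {T U} (f : T -> U) x s : inlist x (map f s) <-> exists y, inlist y s /\ x = f y.
Proof.
elim: s => [|y s IH] /=; first by split=> // [[y []]].
split.
- case=> [<-|/IH [z [h ->]]]; [by exists y; auto| by exists z; auto].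
- case=> z [[<-|h] e]; first by left; rewrite e.
  right; apply/IH; exists z; auto.
Qed.

Lemma inlist_flatten {T} x (ss : seq (seq T)) : inlist x (flatten ss) <-> exists s, inlist s ss /\ inlist x s.
Proof.
elim: ss => [|s ss IH] /=; first by split=> // [[s []]].
rewrite inlist_cat IH; split.
- case=> [h|[t [h1 h2]]]; [exists s; auto| exists t; auto].
- case=> t [[<-|h1] h2]; [by left| right; eauto].
Qed.

Lemma inlist_filter {T} (p : pred T) x s : inlist x (filter p s) <-> inlist x s /\ p x.
Proof.
elim: s => [|y s IH] /=; first by tauto.
case: ifP => py /=.
- split.
  + case=> [e|/IH [h1 h2]]; [by subst; auto| auto].
  + case=> [[e|h] px]; [by left| right; apply/IH; auto].
- split.
  + move/IH=> [h1 h2]; auto.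
  + case=> [[e|h] px]; last by apply/IH.
    by subst; rewrite px in py.
Qed.

Lemma all_inlist {T} (p : pred T) s : all p s <-> forall x, inlist x s -> p x.
Proof.
elim: s => [|y s IH] /=; first by split.
split.
- case/andP=> py /IH h x [<-|hx]; auto.
- move=> h; apply/andP; split; first by apply: h; left.
  apply/IH => x hx; apply: h; auto.
Qed.

Lemma has_inlist {T} (p : pred T) s : has p s <-> exists x, inlist x s /\ p x.
Proof.
elim: s => [|y s IH] /=; first by split=> // [[x []]].
split.
- case/orP=> [py|/IH [x [h1 h2]]]; [exists y; auto| exists x; auto].
- case=> x [[<-|h] px]; apply/orP; [by left| right; apply/IH; eauto].
Qed.

Lemma mem_inlist {T : eqType} (x : T) s : x \in s -> inlist x s.
Proof.
elim: s => [|y s IH] //=; rewrite inE; case/orP=> [/eqP ->|/IH]; auto.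
Qed.

Lemma list_max {T} (r : T -> T -> Prop) (l : seq T) :
  (forall x, r x x) -> (forall x y z, r x y -> r y z -> r x z) ->
  forall x, (exists y, inlist y l /\ r x y) ->
  exists m, inlist m l /\ r x m /\ forall y, inlist y l -> r m y -> r y m.
Proof.
move=> rr rt; elim: l => [|h l IH] x /=; first by case=> y [].
move=> Hx.
case: (classic (exists y, inlist y l /\ r x y)) => [Hl|Hnl].
- have [m' [m'l [xm' mm']]] := IH x Hl.
  case: (classic (r m' h /\ ~ r h m')) => [[m'h nhm']|Hn].
  + case: (classic (exists y, inlist y l /\ r h y)) => [Hh|Hnh].
    * have [m [ml [hm mm]]] := IH h Hh.
      exists m; split; [by right|split; first by eauto].
      move=> y [<-|yl]; [by [] | by apply: mm].
    * exists h; split; [by left| split; first by eauto].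
      move=> y [<-|yl] hy; [by [] | by exfalso; apply: Hnh; eauto].
  + exists m'; split; [by right| split=> //].
    move=> y [<-|yl] hy; last by apply: mm'.
    by apply: NNPP => nh; apply: Hn.
- have xh : r x h.
    case: Hx => y [[<-|yl] xy] //; by exfalso; apply: Hnl; eauto.
  exists h; split; [by left| split=> //].
  move=> y [<-|yl] hy //; exfalso; apply: Hnl; eauto.
Qed.

Section Order.
Variables (X : Type) (le : X -> X -> Prop).

Lemma prime_list {T} (f : T -> pset X) (l : seq T) (J : pset X) :
  ideal le J -> (forall e, inlist e l -> down_closed le (f e)) ->
  (forall y, J y -> exists e, inlist e l /\ f e y) ->
  exists e, inlist e l /\ sub J (f e).
Proof.
move=> [[j0 Jj0] [Jdc Jdir]]; elim: l => [|h l IH] /= Hdc Hcov.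
  by case: (Hcov _ Jj0) => e [].
case: (classic (sub J (f h))) => [Hs|Hns]; first by exists h; auto.
have [x0 [Jx0 nx0]] : exists x0, J x0 /\ ~ f h x0.
  apply: NNPP => H; apply: Hns => y Jy; apply: NNPP => ny; apply: H; eauto.
have [e [el eJ]] : exists e, inlist e l /\ sub J (f e).
  apply: IH; first by move=> e el; apply: Hdc; right.
  move=> y Jy; have [z [Jz [x0z yz]]] := Jdir _ _ Jx0 Jy.
  have [e [[<-|el] ez]] := Hcov _ Jz.
  - by exfalso; apply: nx0; apply: (Hdc h (or_introl erefl)) ez x0z.
  - exists e; split=> //; apply: (Hdc e (or_intror el)) ez yz.
by exists e; auto.
Qed.

Hypothesis Hwqo : wqo_on (fun _ => True) le.

Definition fcov (D : pset X) := exists L : seq (pset X),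
  (forall I, inlist I L -> ideal le I /\ sub I D) /\
  (forall y, D y -> exists I, inlist I L /\ I y).

Definition NFC (D : pset X) := down_closed le D /\ ~ fcov D.

Lemma nfc_step D : NFC D -> exists x, D x /\ NFC (fun z => D z /\ ~ le x z).
Proof.
move: Hwqo => [lerefl [letr _]].
move=> [Ddc Dn].
have dcD x : down_closed le (fun z => D z /\ ~ le x z).
  move=> u v [Dv nv] uv; split; first by apply: Ddc Dv uv.
  move=> xu; apply: nv; apply: letr xu uv => //.
apply: NNPP => Hno.
have Hfc x : D x -> fcov (fun z => D z /\ ~ le x z).
  move=> Dx; apply: NNPP => nf; apply: Hno; exists x; split=> //.
case: (classic (exists x, D x)) => [[x0 Dx0]|Hemp]; last first.
  apply: Dn; exists [::]; split=> // y Dy; exfalso; apply: Hemp; eauto.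
case: (classic (directed le D)) => [Hdir|Hndir].
  apply: Dn; exists [:: D]; split.
  - move=> I [<-|[]]; split=> //; split; [by exists x0| by split].
  - by move=> y Dy; exists D; split=> //; left.
have [x [y [Dx [Dy Hn]]]] : exists x y, D x /\ D y /\ ~ exists z, D z /\ le x z /\ le y z.
  apply: NNPP => H; apply: Hndir => x y Dx Dy; apply: NNPP => H2; apply: H; eauto 6.
have [L1 [L1a L1b]] := Hfc x Dx; have [L2 [L2a L2b]] := Hfc y Dy.
apply: Dn; exists (L1 ++ L2); split.
- move=> I /inlist_cat [/L1a|/L2a] [iI sI]; split=> // z /sI []; auto.
- move=> z Dz; case: (classic (le x z)) => xz.
  + case: (classic (le y z)) => yz; first by exfalso; apply: Hn; eauto.
    have [I [IL Iz]] := L2b z (conj Dz yz); exists I; split=> //; apply/inlist_cat; auto.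
  + have [I [IL Iz]] := L1b z (conj Dz xz); exists I; split=> //; apply/inlist_cat; auto.
Qed.

Lemma fcov_all D : down_closed le D -> fcov D.
Proof.
move=> Ddc; apply: NNPP => nf.
have s0 : {D : pset X | NFC D} by exists D.
have nxt : forall s : {D : pset X | NFC D}, {p : X * {D : pset X | NFC D} |
   sval s p.1 /\ forall z, sval p.2 z -> sval s z /\ ~ le p.1 z}.
  move=> [E HE]; apply: constructive_indefinite_description.
  have [x [Ex HN]] := nfc_step HE.
  by exists (x, exist _ _ HN) => /=; split.
pose st := fun k => iter k (fun s => (sval (nxt s)).2) (exist _ D (conj Ddc nf)).
pose xs := fun k => (sval (nxt (st k))).1.
have Hst k : forall z, sval (st k.+1) z -> sval (st k) z /\ ~ le (xs k) z.
  by move=> z; rewrite /st iterS; case: (svalP (nxt (st k))) => _; apply.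
have Hmono i n : forall z, sval (st (i + n)) z -> sval (st i) z.
  elim: n => [|n IH] z; first by rewrite addn0.
  by rewrite addnS => /Hst [/IH].
have Hxs k : sval (st k) (xs k) by case: (svalP (nxt (st k))).
case: Hwqo => _ [_ Hg]; have [i [j [ij lij]]] := Hg xs (fun _ => I).
have : sval (st i.+1) (xs j).
  by apply: (Hmono i.+1 (j - i.+1)); rewrite subnKC //; apply: Hxs.
by case/Hst.
Qed.

Lemma dec_exists D y : down_closed le D -> D y ->
  exists M, in_idecomp le D M /\ M y.
Proof.
move=> Ddc Dy; have [L [La Lb]] := fcov_all Ddc.
have [I [IL Iy]] := Lb y Dy.
have [M [ML [IM Mmax]]] := @list_max _ (@sub X) L (fun _ _ h => h)
   (fun A B C h1 h2 x hx => h2 _ (h1 _ hx)) I (ex_intro _ I (conj IL (fun _ h => h))).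
exists M; split; last by apply: IM.
have [Mi MD] := La _ ML; split=> //; split=> // J Ji MJ JD.
have [N [NL JN]] := @prime_list _ id L J Ji
   (fun e el => (proj1 (proj2 (proj1 (La e el))))) (fun z Jz => Lb z (JD z Jz)).
move=> z Jz; apply: (Mmax N NL) => //; last by apply: JN.
by move=> u /MJ /JN.
Qed.

End Order.
Section Comp.
Variables (X : Type) (Sig : finType) (step : Sig -> X -> X -> Prop) (le : X -> X -> Prop).
Hypothesis HV : very_wsts step le.

Local Notation cstep := (cstep step le).
Local Notation cstepw := (cstepw step le).
Local Notation ideal := (ideal le).
Local Notation dc := (dc le).
Local Notation post := (post step).
Local Notation level := (level le).

Lemma wqoX : wqo_on (fun _ => True) le. Proof. by case: HV. Qed.
Lemma le_refl x : le x x. Proof. by case: wqoX => h _; apply: h. Qed.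
Lemma le_trans x y z : le x y -> le y z -> le x z.
Proof. by case: wqoX => _ [h _]; apply: h. Qed.
Lemma cdet a I J1 J2 : cstep a I J1 -> cstep a I J2 -> seteq J1 J2.
Proof. by case: HV => _ [_ [_ [h _]]]; apply: h. Qed.
Lemma cssm a I J I' : cstep a I J -> ideal I' -> strict I I' ->
     exists J', cstep a I' J' /\ strict J J'.
Proof. by case: HV => _ [_ [_ [_ [_ [_ [_ [h _]]]]]]]; apply: h. Qed.
Lemma wqoI : forall f : nat -> pset X, (forall k, ideal (f k)) ->
   exists i j, (i < j)%N /\ sub (f i) (f j).
Proof. by case: HV => _ [_ [_ [_ [[_ [_ h]] _]]]]. Qed.
Lemma nolevel : exists n, forall I, ~ level n I.
Proof. by case: HV => _ [_ [_ [_ [_ [_ [_ [_ h]]]]]]]. Qed.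
Lemma wmono a x y x' : step a x y -> le x x' -> exists w y', stepw step w x' y' /\ le y y'.
Proof. by case: HV => _ [h _]; apply: h. Qed.

Lemma seteq_sym (A B : pset X) : seteq A B -> seteq B A.
Proof. by move=> h x; split=> /h. Qed.
Lemma seteq_trans (A B C : pset X) : seteq A B -> seteq B C -> seteq A C.
Proof. by move=> h1 h2 x; rewrite h1 h2. Qed.

Lemma ideal_seteq I I' : seteq I I' -> ideal I -> ideal I'.
Proof.
move=> e [[x Ix] [dcI dirI]]; split; first by exists x; apply/e.
split; first by move=> u v /e Iv uv; apply/e; apply: dcI Iv uv.
move=> u v /e Iu /e Iv; have [z [Iz [h1 h2]]] := dirI _ _ Iu Iv.
by exists z; split=> //; apply/e.
Qed.

Lemma dc_dc D : down_closed le (dc D).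
Proof. by move=> u v [z [Dz vz]] uv; exists z; split=> //; apply: le_trans uv vz. Qed.

Lemma post_seteq I I' a : seteq I I' -> seteq (post I a) (post I' a).
Proof. by move=> e y; split=> [[x [/e Ix h]]|[x [/e Ix h]]]; exists x. Qed.
Lemma dc_seteq D D' : seteq D D' -> seteq (dc D) (dc D').
Proof. by move=> e y; split=> [[x [/e Ix h]]|[x [/e Ix h]]]; exists x. Qed.

Lemma idecomp_seteq D D' M M' : seteq D D' -> seteq M M' -> in_idecomp le D M -> in_idecomp le D' M'.
Proof.
move=> eD eM [Mi [MD Mmax]]; split; first by apply: ideal_seteq Mi.
split; first by move=> y /eM /MD /eD.
move=> J Ji M'J JD' y Jy; apply/eM; apply: (Mmax J Ji) => //.
- by move=> z /eM /M'J.
- by move=> z /JD' /eD.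
Qed.

Lemma cstep_src a I I' J : seteq I I' -> cstep a I J -> cstep a I' J.
Proof.
move=> e [Ii Hd]; split; first by apply: ideal_seteq Ii.
apply: idecomp_seteq Hd => //; apply: dc_seteq; exact: post_seteq.
Qed.
Lemma cstep_tgt a I J J' : seteq J J' -> cstep a I J -> cstep a I J'.
Proof. move=> e [Ii Hd]; split=> //; apply: idecomp_seteq Hd => //. Qed.
Lemma cstep_idl a I J : cstep a I J -> ideal I. Proof. by case. Qed.
Lemma cstep_idr a I J : cstep a I J -> ideal J. Proof. by case=> _ []. Qed.

Lemma cstep_exists a I z : ideal I -> post I a z -> exists J, cstep a I J /\ J z.
Proof.
move=> Ii pz; have [M [HM Mz]] := dec_exists wqoX (@dc_dc (post I a)) (ex_intro _ z (conj pz (le_refl z))).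
by exists M; split.
Qed.

Lemma cstep_char a I J : cstep a I J -> seteq J (dc (post I a)).
Proof.
move=> hs y; split; first by case: hs => _ [_ [h _]]; apply: h.
move=> hy; have [M [HM My]] := dec_exists wqoX (@dc_dc (post I a)) hy.
have hM : cstep a I M by split=> //; case: hs.
by apply/(cdet hs hM).
Qed.

Lemma cstepw_src w I I' J : seteq I I' -> cstepw w I J -> cstepw w I' J.
Proof.
case: w => [|a w] /= e.
- by move=> h; apply: seteq_trans h; apply: seteq_sym.
- by case=> K [h1 h2]; exists K; split=> //; apply: cstep_src h1.
Qed.
Lemma cstepw_tgt w I J J' : seteq J J' -> cstepw w I J -> cstepw w I J'.
Proof.
elim: w I => [|a w IH] I /= e.
- by move=> h; apply: seteq_trans e.
- by case=> K [h1 h2]; exists K; split=> //; apply: IH.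
Qed.
Lemma cstepw_det w I I' J J' : seteq I I' -> cstepw w I J -> cstepw w I' J' -> seteq J J'.
Proof.
elim: w I I' => [|a w IH] I I' /= e.
- move=> h1 h2; apply: seteq_trans (seteq_sym h1) _; by apply: seteq_trans e h2.
- case=> K [h1 h2] [K' [h1' h2']]; apply: (IH K K') => //.
  by apply: cdet h1 (cstep_src (seteq_sym e) h1').
Qed.
Lemma cstepw_ideal w I J : ideal I -> cstepw w I J -> ideal J.
Proof.
elim: w I => [|a w IH] I /= Ii; first by move=> e; apply: ideal_seteq Ii.
by case=> K [h1 h2]; apply: IH h2; apply: cstep_idr h1.
Qed.
Lemma cstepw_cat w1 w2 I K J : cstepw w1 I K -> cstepw w2 K J -> cstepw (w1 ++ w2) I J.
Proof.
elim: w1 I => [|a w IH] I /=.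
- by move=> e h; apply: cstepw_src h; apply: seteq_sym.
- by case=> K0 [h1 h2] h3; exists K0; split=> //; apply: IH h3.
Qed.

Lemma strict_seteq (A B A' B' : pset X) : seteq A A' -> seteq B B' -> strict A B -> strict A' B'.
Proof.
move=> eA eB [h1 h2]; split; first by move=> x /eA /h1 /eB.
by move=> h; apply: h2 => x /eB /h /eA.
Qed.

Lemma cstepw_ssm w I J I' : cstepw w I J -> ideal I' -> strict I I' ->
  exists J', cstepw w I' J' /\ strict J J'.
Proof.
elim: w I I' => [|a w IH] I I' /=.
- move=> e _ s; exists I'; split=> //; apply: strict_seteq s => //; exact: seteq_sym e.
- case=> K [h1 h2] Ii' s; have [K' [h1' s']] := cssm h1 Ii' s.
  have [J' [h2' s'']] := IH _ _ h2 (cstep_idr h1') s'.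
  by exists J'; split=> //; exists K'.
Qed.

Lemma chain_mono (f : nat -> pset X) : (forall k, sub (f k) (f k.+1)) ->
  forall i n, sub (f i) (f (i + n)).
Proof. move=> h i; elim=> [|n IH]; first by rewrite addn0. by rewrite addnS => x /IH /h. Qed.

Lemma chain_le (f : nat -> pset X) : (forall k, sub (f k) (f k.+1)) ->
  forall i j, (i <= j)%N -> sub (f i) (f j).
Proof. by move=> h i j ij; rewrite -(subnKC ij); apply: chain_mono. Qed.

Lemma union_ideal (f : nat -> pset X) : (forall k, ideal (f k)) -> (forall k, sub (f k) (f k.+1)) ->
  ideal (fun x => exists k, f k x).
Proof.
move=> hi hs; split; first by case: (hi 0) => [[x hx] _]; exists x, 0.
split; first by move=> u v [k hk] uv; exists k; case: (hi k) => _ [h _]; apply: h hk uv.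
move=> u v [i hu] [j hv].
have hu' := chain_le hs (leq_maxl i j) hu; have hv' := chain_le hs (leq_maxr i j) hv.
have [z [hz [h1 h2]]] := proj2 (proj2 (hi (maxn i j))) _ _ hu' hv'.
by exists z; split=> //; exists (maxn i j).
Qed.

Lemma level_seteq m I I' : seteq I I' -> level m I -> level m I'.
Proof.
case: m => [|m] /= e; first by apply: ideal_seteq.
by case=> f [h1 [h2 h3]]; exists f; split=> //; split=> //; apply: seteq_trans h3; apply: seteq_sym.
Qed.

Lemma level_ideal m I : level m I -> ideal I.
Proof.
elim: m I => [|m IH] I //= [f [h1 [h2 h3]]].
apply: ideal_seteq (seteq_sym h3) _; apply: union_ideal.
- by move=> k; apply: IH.
- by move=> k; case: (h2 k).
Qed.

Lemma level_down m I : level m.+1 I -> level m I.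
Proof.
elim: m I => [|m IH] I; first by apply: level_ideal.
case=> f [h1 [h2 h3]]; exists f; split=> //; by move=> k; apply: IH.
Qed.

Lemma level_down_n m n I : level (m + n) I -> level m I.
Proof. elim: n => [|n IH]; first by rewrite addn0. by rewrite addnS => /level_down. Qed.

Lemma level_step m a I J : cstep a I J -> level m I -> level m J.
Proof.
elim: m a I J => [|m IH] a I J hs; first by move=> _; apply: cstep_idr hs.
case=> f [hf1 [hf2 hf3]].
have hfi k : ideal (f k) by apply: level_ideal (hf1 k).
have hfs k : sub (f k) (f k.+1) by case: (hf2 k).
have [y0 Jy0] := proj1 (cstep_idr hs).
have [z0 [[x0 [Ix0 sx0]] _]] := proj1 (cstep_char hs y0) Jy0.
have [k0 fx0] := proj1 (hf3 x0) Ix0.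
have hex k : exists M, cstep a (f (k + k0)) M.
  have := @cstep_exists a (f (k + k0)) z0 (hfi _).
  case; first by exists x0; split=> //; rewrite addnC; apply: chain_mono fx0.
  by move=> M [hM _]; exists M.
pose h := fun k => proj1_sig (constructive_indefinite_description _ (hex k)).
have hh k : cstep a (f (k + k0)) (h k) by rewrite /h; case: constructive_indefinite_description.
exists h; split; first by move=> k; apply: (IH a (f (k + k0))); [apply: hh| apply: hf1].
split.
- move=> k; have [J' [hJ' sJ']] := cssm (hh k) (hfi (k.+1 + k0)) (hf2 (k + k0)).
  apply: strict_seteq sJ' => //; apply: cdet hJ' (hh k.+1).
- move=> y; split.
  + move/(cstep_char hs) => [z [[x [/hf3 [k1 fx] sx]] yz]].
    exists k1; apply/(cstep_char (hh k1)); exists z; split=> //; exists x; split=> //.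
    by apply: chain_mono fx.
  + case=> k /(cstep_char (hh k)) [z [[x [fx sx]] yz]].
    apply/(cstep_char hs); exists z; split=> //; exists x; split=> //.
    by apply/hf3; exists (k + k0).
Qed.

Lemma level_word m w I J : cstepw w I J -> level m I -> level m J.
Proof.
elim: w I => [|a w IH] I /=; first by move=> e; apply: level_seteq.
by case=> K [h1 h2] hl; apply: (IH K h2); apply: level_step h1 hl.
Qed.

Definition wpow (u : seq Sig) k := flatten (nseq k u).

Lemma accel_level m u I K : level m I ->
  (exists J, cstepw u I J /\ strict I J) ->
  seteq K (fun x => exists k J, cstepw (wpow u k) I J /\ J x) ->
  level m.+1 K.
Proof.
move=> hl [J1 [hJ1 sJ1]] hK.
have Ii := level_ideal hl.
have hex : forall k, forall I0 J0, ideal I0 -> cstepw u I0 J0 -> strict I0 J0 ->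
   exists J, cstepw (wpow u k) I0 J.
  elim=> [|k IH] I0 J0 Ii0 h0 s0; first by exists I0.
  have [J2 [h2 s2]] := cstepw_ssm h0 (cstepw_ideal Ii0 h0) s0.
  have [J hJ] := IH J0 J2 (cstepw_ideal Ii0 h0) h2 s2.
  by exists J; apply: cstepw_cat h0 hJ.
have hex' k : exists J, cstepw (wpow u k) I J by apply: hex hJ1 sJ1.
pose g := fun k => proj1_sig (constructive_indefinite_description _ (hex' k)).
have hg k : cstepw (wpow u k) I (g k) by rewrite /g; case: constructive_indefinite_description.
exists g; split; first by move=> k; apply: level_word (hg k) hl.
split.
- move=> k; have [J' [h' s']] := cstepw_ssm (hg k) (cstepw_ideal Ii hJ1) sJ1.
  apply: strict_seteq s' => //.
  apply: (@cstepw_det (wpow u k.+1) I I); [by [] | | exact: hg].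
  have -> : wpow u k.+1 = u ++ wpow u k by [].
  by apply: cstepw_cat hJ1 h'.
- apply: seteq_trans hK _ => y; split.
  + case=> k [J [hJ Jy]]; exists k; apply/(cstepw_det (fun x => iff_refl _) hJ (hg k)) => //.
  + by case=> k gy; exists k, (g k).
Qed.

End Comp.
Section Progs.
Variables (Sig : finType) (C : Type).

Inductive M (A : Type) : Type :=
| MRet (r : A)
| MIncl (c d : C) (k : bool -> M A)
| MSucc (c : C) (a : Sig) (k : seq C -> M A)
| MAccel (c : C) (w : seq Sig) (k : C -> M A).

Arguments MRet {A}.

Fixpoint mbind {A B} (m : M A) (f : A -> M B) : M B :=
  match m with
  | MRet a => f a
  | MIncl c d k => MIncl c d (fun b => mbind (k b) f)
  | MSucc c a k => MSucc c a (fun l => mbind (k l) f)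
  | MAccel c w k => MAccel c w (fun e => mbind (k e) f)
  end.

Section Eval.
Variables (inc : C -> C -> bool) (sc : C -> Sig -> seq C) (ac : C -> seq Sig -> C).
Fixpoint eval {A} (m : M A) : A :=
  match m with
  | MRet a => a
  | MIncl c d k => eval (k (inc c d))
  | MSucc c a k => eval (k (sc c a))
  | MAccel c w k => eval (k (ac c w))
  end.
Lemma eval_bind {A B} (m : M A) (f : A -> M B) : eval (mbind m f) = eval (f (eval m)).
Proof. by elim: m => //= *. Qed.
End Eval.

Definition incM c d : M bool := MIncl c d (@MRet _).
Definition succM c a : M (seq C) := MSucc c a (@MRet _).
Definition accM c w : M C := MAccel c w (@MRet _).

Fixpoint mapM {A B} (f : A -> M B) (l : seq A) : M (seq B) :=
  match l with
  | [::] => MRet [::]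
  | x :: l' => mbind (f x) (fun y => mbind (mapM f l') (fun ys => MRet (y :: ys)))
  end.

Lemma eval_mapM inc sc ac {A B} (f : A -> M B) l :
  eval inc sc ac (mapM f l) = map (fun x => eval inc sc ac (f x)) l.
Proof. by elim: l => //= y l IH; rewrite !eval_bind IH. Qed.

Definition prs {A B} (t : seq A) (l : seq B) := flatten (map (fun c => map (fun a => (c, a)) l) t).

Fixpoint wx (n : nat) : seq (seq Sig) :=
  if n is n'.+1 then flatten (map (fun a => map (fun w => a :: w) (wx n')) (enum Sig)) else [:: [::]].
Definition wle n := flatten (map wx (iota 1 n)).

Variable cx : C.

Fixpoint Tm (n : nat) : M (seq C) :=
  if n is n'.+1 then
    mbind (Tm n') (fun t =>
    mbind (mapM (fun p => succM p.1 p.2) (prs t (enum Sig))) (fun ss =>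
    mbind (mapM (fun p => accM p.1 p.2) (prs t (wle n))) (fun as_ =>
    MRet (t ++ flatten ss ++ as_))))
  else MRet [:: cx].

Definition implM c e : M bool := mbind (incM c e) (fun b => if b then incM e c else MRet true).

Definition round (n : nat) : M (option (seq C)) :=
  mbind (Tm n) (fun t =>
  mbind (mapM (fun p => succM p.1 p.2) (prs t (enum Sig))) (fun ss =>
  mbind (mapM (fun d => mbind (mapM (fun e => incM d e) t) (fun bs => MRet (has id bs))) (flatten ss)) (fun oks =>
  if all id oks then
    mbind (mapM (fun c => mbind (mapM (fun e => implM c e) t) (fun bs => MRet (if all id bs then [:: c] else [::]))) t)
      (fun outs => MRet (Some (flatten outs)))
  else MRet None))).

Variable R : Type.
Variable fin : seq C -> prog Sig C R.

CoFixpoint run (n : nat) (m : M (option (seq C))) : prog Sig C R :=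
  match m with
  | MRet None => AskIncl cx cx (fun _ => run n.+1 (round n.+1))
  | MRet (Some out) => fin out
  | MIncl c d k => AskIncl c d (fun b => run n (k b))
  | MSucc c a k => AskSucc c a (fun l => run n (k l))
  | MAccel c w k => AskAccel c w (fun e => run n (k e))
  end.

Definition pfrob (p : prog Sig C R) : prog Sig C R :=
  match p with
  | Ret r => Ret r
  | AskIncl c d k => AskIncl c d k
  | AskSucc c a k => AskSucc c a k
  | AskAccel c w k => AskAccel c w k
  end.
Lemma pfrob_eq p : p = pfrob p. Proof. by case: p. Qed.

Lemma run_some n out : run n (MRet (Some out)) = fin out.
Proof. by rewrite (pfrob_eq (run _ _)) /=; case: (fin out). Qed.

Section Runs.
Variables (inc : C -> C -> bool) (sc : C -> Sig -> seq C) (ac : C -> seq Sig -> C).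

Lemma runs_run (r : R) m n :
  (forall out, eval inc sc ac m = Some out -> runs inc sc ac (fin out) r) ->
  (eval inc sc ac m = None -> runs inc sc ac (run n.+1 (round n.+1)) r) ->
  runs inc sc ac (run n m) r.
Proof.
elim: m n => [[out|]|c d k IH|c a k IH|c w k IH] n /= h1 h2.
- by rewrite run_some; apply: h1.
- by rewrite (pfrob_eq (run n _)) /=; apply: runs_incl; apply: h2.
- by rewrite (pfrob_eq (run n _)) /=; apply: runs_incl; apply: IH.
- by rewrite (pfrob_eq (run n _)) /=; apply: runs_succ; apply: IH.
- by rewrite (pfrob_eq (run n _)) /=; apply: runs_accel; apply: IH.
Qed.

Lemma runs_loop (Q : R -> Prop) :
  (forall n out, eval inc sc ac (round n) = Some out -> exists r, runs inc sc ac (fin out) r /\ Q r) ->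
  (exists N, eval inc sc ac (round N) <> None) ->
  exists r, runs inc sc ac (run 0 (round 0)) r /\ Q r.
Proof.
move=> hs [N hN].
suff: forall k n, N = n + k -> exists r, runs inc sc ac (run n (round n)) r /\ Q r.
  by move=> h; apply: (h N 0).
elim=> [|k IH] n e.
- rewrite addn0 in e; subst n.
  case E: (eval inc sc ac (round N)) => [out|]; last by [].
  have [r [hr hq]] := hs _ _ E; exists r; split=> //.
  by apply: runs_run => [o|]; rewrite E // => [[<-]].
- case E: (eval inc sc ac (round n)) => [out|].
  + have [r [hr hq]] := hs _ _ E; exists r; split=> //.
    by apply: runs_run => [o|]; rewrite E // => [[<-]].
  + have [r [hr hq]] : exists r, runs inc sc ac (run n.+1 (round n.+1)) r /\ Q r.
      by apply: IH; rewrite e addSnnS.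
    exists r; split=> //; apply: runs_run => [o|]; by rewrite E.
Qed.
End Runs.

End Progs.

Fixpoint emb {Sig : finType} {C A R} (m : M Sig C A) (k : A -> prog Sig C R) : prog Sig C R :=
  match m with
  | MRet a => k a
  | MIncl c d f => AskIncl c d (fun b => emb (f b) k)
  | MSucc c a f => AskSucc c a (fun l => emb (f l) k)
  | MAccel c w f => AskAccel c w (fun e => emb (f e) k)
  end.

Lemma runs_emb {Sig : finType} {C A R} inc sc ac (m : M Sig C A) (k : A -> prog Sig C R) r :
  runs inc sc ac (k (eval inc sc ac m)) r -> runs inc sc ac (emb m k) r.
Proof.
elim: m => //= [c d f IH|c a f IH|c w f IH] h.
- by apply: runs_incl; apply: IH.
- by apply: runs_succ; apply: IH.
- by apply: runs_accel; apply: IH.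
Qed.
Section Codes.
Variables (X : Type) (Sig : finType) (step : Sig -> X -> X -> Prop) (le : X -> X -> Prop).
Hypothesis HV : very_wsts step le.
Variables (C : Type) (E : effective step le C) (x : X) (cx : C).
Hypothesis Hcx : seteq (den E cx) (fun y => le y x).

Local Notation den := (den E).
Local Notation succ := (succ E).
Local Notation accel := (accel E).
Local Notation cstep := (cstep step le).
Local Notation cstepw := (cstepw step le).

Inductive inA : C -> Prop :=
| A0 : inA cx
| As c a d : inA c -> inlist d (succ c a) -> inA d
| Aacc c w : inA c -> w <> [::] -> inA (accel c w).

Definition DD := dc le (reach step x).

Lemma stepw_cat w1 w2 y z u : stepw step w1 y z -> stepw step w2 z u -> stepw step (w1 ++ w2) y u.
Proof.
elim: w1 y => [|a w IH] y /=; first by move=> ->.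
by case=> v [h1 h2] h3; exists v; split=> //; apply: IH h3.
Qed.

Lemma DD_post a y z : DD y -> step a y z -> DD z.
Proof.
move=> [r [[w hw] yr]] hs; have [w' [r' [h1 h2]]] := wmono HV hs yr.
exists r'; split=> //; exists (w ++ w'); apply: stepw_cat hw h1.
Qed.

Lemma sub_DD_cstep a I J : sub I DD -> cstep a I J -> sub J DD.
Proof.
move=> hI hs y /(cstep_char HV hs) [z [[u [Iu su]] yz]].
have [r [hr zr]] := DD_post (hI _ Iu) su.
by exists r; split=> //; apply: (le_trans HV yz zr).
Qed.

Lemma sub_DD_cstepw w I J : sub I DD -> cstepw w I J -> sub J DD.
Proof.
elim: w I => [|a w IH] I /=; first by move=> hI e y /e /hI.
by move=> hI [K [h1 h2]]; apply: (IH K) h2; apply: sub_DD_cstep h1.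
Qed.

Lemma inA_DD c : inA c -> sub (den c) DD.
Proof.
elim=> {c} [|c a d _ IH hd|c w _ IH hw].
- move=> y /Hcx yx; exists x; split; [by exists [::] | by []].
- by apply: sub_DD_cstep IH (succ_sound hd).
- have [h1 h2] := accelP E c hw.
  case: (classic (exists J, cstepw w (den c) J /\ strict (den c) J)) => g.
  + move=> y /(h1 g) [k [J [hJ Jy]]]; exact: (sub_DD_cstepw IH hJ Jy).
  + by move=> y /(h2 g) /IH.
Qed.

Lemma succ_cover c a z : post step (den c) a z -> exists d, inlist d (succ c a) /\ den d z.
Proof.
move=> pz; have [J [hJ Jz]] := cstep_exists HV (den_ideal E c) pz.
have [d [hd ed]] := succ_complete hJ.
by exists d; split=> //; apply/ed.
Qed.

Definition lsub (s t : seq C) := forall e, inlist e s -> inlist e t.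

Definition clos (G K : seq C) := forall g, inlist g G -> forall a d, inlist d (succ g a) ->
  exists e, inlist e K /\ sub (den d) (den e).

Lemma clos_mono G K K' : clos G K -> lsub K K' -> clos G K'.
Proof. move=> h hs g hg a d hd; have [e [he se]] := h g hg a d hd; by exists e; split; [apply: hs|]. Qed.
Lemma clos_cat G1 G2 K : clos G1 K -> clos G2 K -> clos (G1 ++ G2) K.
Proof. by move=> h1 h2 g /inlist_cat [/h1|/h2]. Qed.

Definition allA (G : seq C) := forall g, inlist g G -> inA g.

Definition Good (H : seq C) (c : C) := exists G, allA G /\
  (exists e, inlist e (G ++ H) /\ sub (den c) (den e)) /\ clos G (G ++ H).

Lemma Good_weak H c c' : sub (den c) (den c') -> Good [::] c' -> Good H c.
Proof.
move=> s [G [hA [[e [he se]] hc]]]; exists G; split=> //; split.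
- exists e; split; last by move=> y /s /se.
  by move: he; rewrite cats0 => he; apply/inlist_cat; left.
- apply: (clos_mono hc) => f; rewrite cats0 => hf; apply/inlist_cat; auto.
Qed.

Lemma Good_list H' (l : seq C) : (forall d, inlist d l -> Good H' d) ->
  exists G, allA G /\ clos G (G ++ H') /\
    forall d, inlist d l -> exists e, inlist e (G ++ H') /\ sub (den d) (den e).
Proof.
elim: l => [|d l IH] hl.
  by exists [::]; split=> //; split=> // ? [].
have [G1 [hA1 [[e [he se]] hc1]]] := hl d (or_introl erefl).
have [G2 [hA2 [hc2 hcov]]] := IH (fun d' h => hl d' (or_intror h)).
have l1 : lsub (G1 ++ H') ((G1 ++ G2) ++ H').
  move=> f /inlist_cat [h|h]; apply/inlist_cat; [left; apply/inlist_cat; auto| auto].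
have l2 : lsub (G2 ++ H') ((G1 ++ G2) ++ H').
  move=> f /inlist_cat [h|h]; apply/inlist_cat; [left; apply/inlist_cat; auto| auto].
exists (G1 ++ G2); split; first by move=> g /inlist_cat [/hA1|/hA2].
split; first by apply: clos_cat; [apply: clos_mono hc1 l1| apply: clos_mono hc2 l2].
move=> d' [<-|hd'].
- by exists e; split=> //; by apply: l1.
- have [f [hf sf]] := hcov d' hd'; exists f; split=> //; by apply: l2.
Qed.

Definition kids c := flatten [seq succ c a | a <- enum Sig].
Lemma in_kids c a d : inlist d (succ c a) -> inlist d (kids c).
Proof.
move=> h; apply/inlist_flatten; exists (succ c a); split=> //.
by apply/inlist_map; exists a; split=> //; apply: mem_inlist; rewrite mem_enum.
Qed.
Lemma kids_in c d : inlist d (kids c) -> exists a, inlist d (succ c a).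
Proof. by case/inlist_flatten=> s [/inlist_map [a [_ ->]] h]; exists a. Qed.

Section Lev.
Variable m : nat.
Definition Bad (p : seq C * C) := inA p.2 /\ level le m (den p.2) /\ ~ Good p.1 p.2.

Lemma bad_notcov H c : Bad (H, c) -> ~ exists e, inlist e H /\ sub (den c) (den e).
Proof.
move=> [_ [_ nG]] [e [he se]]; apply: nG; exists [::]; split=> //; split.
- by exists e.
- by move=> ? [].
Qed.

Lemma bad_child H c : Bad (H, c) -> exists a d, inlist d (succ c a) /\ Bad (H ++ [:: c], d).
Proof.
move=> hb; apply: NNPP => hn.
have hg : forall d, inlist d (kids c) -> Good (H ++ [:: c]) d.
  move=> d /kids_in [a hd]; apply: NNPP => ng; apply: hn; exists a, d; split=> //.
  case: hb => hA [hl _]; split; first by apply: As hA hd.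
  by split=> //=; exact: (level_step HV (succ_sound hd) hl).
have [G0 [hA0 [hc0 hcov]]] := Good_list hg.
case: hb => hA [_ nG]; apply: nG.
have l1 : lsub (G0 ++ H ++ [:: c]) ((c :: G0) ++ H).
  move=> f /inlist_cat [h|/inlist_cat [h|[<-|[]]]]; [by right; apply/inlist_cat; left|
     by right; apply/inlist_cat; right| by left].
exists (c :: G0); split; first by move=> g [<-|/hA0].
split; first by exists c; split; [left| ].
move=> g [<-|hg0] a d hd.
- have [e [he se]] := hcov d (in_kids hd); exists e; split=> //; by apply: l1.
- have [e [he se]] := hc0 g hg0 a d hd; exists e; split=> //; by apply: l1.
Qed.

Fixpoint ws (f : nat -> Sig) (i n : nat) : seq Sig :=
  if n is n'.+1 then f i :: ws f i.+1 n' else [::].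

Lemma level_up : (forall c, inA c -> level le m.+1 (den c) -> Good [::] c) ->
  forall c, inA c -> level le m (den c) -> Good [::] c.
Proof.
move=> IHm c hA hl; apply: NNPP => nG.
pose St := {p : seq C * C | Bad p}.
have nxt : forall s : St, {q : Sig * St | inlist (sval q.2).2 (succ (sval s).2 q.1) /\
     (sval q.2).1 = (sval s).1 ++ [:: (sval s).2]}.
  move=> [[H c0] hb]; apply: constructive_indefinite_description.
  have [a [d [hd hb']]] := bad_child hb.
  by exists (a, exist _ (H ++ [:: c0], d) hb').
pose s0 : St := exist _ ([::], c) (conj hA (conj hl nG)).
pose st := fun k => iter k (fun s => (sval (nxt s)).2) s0.
pose al := fun k => (sval (nxt (st k))).1.
pose cc := fun k => (sval (st k)).2.
pose HH := fun k => (sval (st k)).1.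
have F1 k : inlist (cc k.+1) (succ (cc k) (al k)) /\ HH k.+1 = HH k ++ [:: cc k].
  by rewrite /cc /HH /al /st iterS; case: (svalP (nxt (st k))).
have Fb k : Bad (HH k, cc k) by rewrite /HH /cc; case: (st k) => [[]].
have F2 i j : (i < j)%N -> inlist (cc i) (HH j).
  elim: j => [|j IH] //; rewrite ltnS leq_eqVlt => /orP [/eqP ->|hij].
  - by rewrite (proj2 (F1 j)); apply/inlist_cat; right; left.
  - by rewrite (proj2 (F1 j)); apply/inlist_cat; left; apply: IH.
have F3 n : forall i, cstepw (ws al i n) (den (cc i)) (den (cc (i + n))).
  elim: n => [|n IH] i; first by rewrite addn0 /=.
  exists (den (cc i.+1)); split; first by apply: succ_sound (proj1 (F1 i)).
  by rewrite -addSnnS; apply: IH.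
have [i [j [ij sij]]] := wqoI HV (fun k => den_ideal E (cc k)).
have ej : j = i + (j - i) by rewrite subnKC // ltnW.
set u := ws al i (j - i).
have hu : cstepw u (den (cc i)) (den (cc j)) by rewrite ej; apply: F3.
have une : u <> [::] by rewrite /u; case: (j - i) (subn_gt0 i j) => [|n]; rewrite ?ij.
have nsji : ~ sub (den (cc j)) (den (cc i)).
  by move=> h; apply: (bad_notcov (Fb j)); exists (cc i); split=> //; apply: F2.
have grows : exists J, cstepw u (den (cc i)) J /\ strict (den (cc i)) J.
  by exists (den (cc j)); split=> //; split.
have [h1 _] := accelP E (cc i) une.
have hK := h1 grows.
have hAi : inA (cc i) by case: (Fb i).
have hli : level le m (den (cc i)) by case: (Fb i) => _ [].
have hlK : level le m.+1 (den (accel (cc i) u)) by exact: (accel_level HV hli grows hK).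
have gK := IHm _ (Aacc hAi une) hlK.
have sjK : sub (den (cc j)) (den (accel (cc i) u)).
  move=> y hy; apply/hK; exists 1, (den (cc j)); split=> //.
  by rewrite /= cats0.
by case: (Fb j) => _ [_ []]; apply: Good_weak sjK gK.
Qed.
End Lev.

Lemma good_cx : Good [::] cx.
Proof.
have [N hN] := nolevel HV.
suff: forall n m, (N <= m + n)%N -> forall c, inA c -> level le m (den c) -> Good [::] c.
  by move=> h; apply: (h N 0 _ cx A0 (den_ideal E cx)); rewrite add0n.
elim=> [|n IH] m hm c hc hl.
- exfalso; apply: (hN (den c)); rewrite addn0 in hm.
  have := @level_down_n X le N (m - N) (den c); rewrite subnKC //; by apply.
- apply: level_up hc hl => c' hc' hl'; apply: IH hc' hl'; by rewrite addSnnS.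
Qed.

Lemma cover_exists : exists G, allA G /\ forall y, DD y -> exists g, inlist g G /\ den g y.
Proof.
have [G [hA [[e [he se]] hc]]] := good_cx.
rewrite cats0 in he hc.
exists G; split=> //.
have hdc g : down_closed le (den g) by case: (den_ideal E g) => _ [].
have hr : forall w y z, stepw step w y z -> (exists g, inlist g G /\ den g y) ->
    exists g, inlist g G /\ den g z.
  elim=> [|a w IH] y z /=; first by move=> ->.
  move=> [v [sv hw]] [g [hg gy]]; apply: (IH v z hw).
  have [d [hd dv]] := succ_cover (ex_intro _ y (conj gy sv)).
  have [f [hf sf]] := hc g hg a d hd; by exists f; split=> //; apply: sf.
move=> y [r [[w hw] yr]].
have [g [hg gr]] := hr w x r hw (ex_intro _ e (conj he (se x (proj2 (Hcx x) (le_refl HV x))))).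
by exists g; split=> //; apply: hdc gr yr.
Qed.

Local Notation ev := (eval (incl E) (Defs.succ E) (Defs.accel E)).

Definition TT n := ev (Tm Sig cx n).

Lemma TT_S n : TT n.+1 = TT n ++ flatten (map (fun p => succ p.1 p.2) (prs (TT n) (enum Sig))) ++
   map (fun p => accel p.1 p.2) (prs (TT n) (wle Sig n.+1)).
Proof. by rewrite /TT /= ?eval_bind ?eval_mapM /= ?eval_bind ?eval_mapM. Qed.

Lemma prs_in {A B} (t : seq A) (l : seq B) c a : inlist c t -> inlist a l -> inlist (c, a) (prs t l).
Proof.
move=> hc ha; apply/inlist_flatten; exists (map (fun a => (c, a)) l); split.
- by apply/inlist_map; exists c.
- by apply/inlist_map; exists a.
Qed.
Lemma prs_inv {A B} (t : seq A) (l : seq B) p : inlist p (prs t l) -> inlist p.1 t /\ inlist p.2 l.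
Proof. by case/inlist_flatten=> s [/inlist_map [c [hc ->]] /inlist_map [a [ha ->]]]. Qed.

Lemma TT_mono n k c : inlist c (TT n) -> inlist c (TT (n + k)).
Proof. elim: k => [|k IH]; first by rewrite addn0. by rewrite addnS TT_S => /IH h; apply/inlist_cat; left. Qed.

Lemma cx_TT n : inlist cx (TT n).
Proof. by have := @TT_mono 0 n cx; rewrite add0n; apply; left. Qed.

Lemma inlist_mem {T : eqType} (y : T) s : inlist y s -> y \in s.
Proof.
elim: s => [|z s IH] /=; first by [].
by case=> [->|/IH h]; rewrite inE ?eqxx // h orbT.
Qed.

Lemma wx_size k w : inlist w (wx Sig k) -> size w = k.
Proof.
elim: k w => [|k IH] w /=; first by case=> [<-|[]].
by case/inlist_flatten=> s [/inlist_map [a [_ ->]] /inlist_map [w' [h ->]]] /=; rewrite (IH _ h).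
Qed.

Lemma wle_nn n w : inlist w (wle Sig n) -> w <> [::].
Proof.
case/inlist_flatten=> s [/inlist_map [k [hk ->]] /wx_size hs] e.
move: hk => /inlist_mem; rewrite mem_iota; subst w; by rewrite -hs.
Qed.

Lemma wx_in w : inlist w (wx Sig (size w)).
Proof.
elim: w => [|a w IH] /=; first by left.
apply/inlist_flatten; exists (map (fun w => a :: w) (wx Sig (size w))); split.
- by apply/inlist_map; exists a; split=> //; apply: mem_inlist; rewrite mem_enum.
- by apply/inlist_map; exists w.
Qed.

Lemma wle_in n w : w <> [::] -> (size w <= n)%N -> inlist w (wle Sig n).
Proof.
move=> hw hs; apply/inlist_flatten; exists (wx Sig (size w)); split; last by apply: wx_in.
apply/inlist_map; exists (size w); split=> //; apply: mem_inlist; rewrite mem_iota.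
by case: w hw hs => [|a w] //= _ hs; rewrite add1n ltnS hs.
Qed.

Lemma TT_A n c : inlist c (TT n) -> inA c.
Proof.
elim: n c => [|n IH] c; first by case=> [<-|[]]; apply: A0.
rewrite TT_S => /inlist_cat [/IH //|/inlist_cat [|]].
- case/inlist_flatten=> s [/inlist_map [p [hp ->]] hc].
  by have [h1 _] := prs_inv hp; apply: As (IH _ h1) hc.
- case/inlist_map=> p [hp ->]; have [h1 h2] := prs_inv hp; apply: Aacc; first by apply: IH.
  exact: wle_nn h2.
Qed.

Lemma inA_TT c : inA c -> exists n, inlist c (TT n).
Proof.
elim=> {c} [|c a d _ [n hn] hd|c w _ [n hn] hw]; first by exists 0; left.
- exists n.+1; rewrite TT_S; apply/inlist_cat; right; apply/inlist_cat; left.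
  apply/inlist_flatten; exists (succ c a); split=> //.
  apply/inlist_map; exists (c, a); split=> //; apply: prs_in hn _.
  by apply: mem_inlist; rewrite mem_enum.
- exists (maxn n (size w)).+1; rewrite TT_S; apply/inlist_cat; right; apply/inlist_cat; right.
  apply/inlist_map; exists (c, w); split=> //; apply: prs_in.
  + by have := @TT_mono n (maxn n (size w) - n) c hn; rewrite subnKC // leq_maxl.
  + by apply: wle_in => //; apply: leq_trans (leq_maxr n (size w)) _.
Qed.

Lemma list_TT G : allA G -> exists n, forall g, inlist g G -> inlist g (TT n).
Proof.
elim: G => [|g G IH] hA; first by exists 0.
have [n1 h1] := inA_TT (hA g (or_introl erefl)).
have [n2 h2] := IH (fun g' h => hA g' (or_intror h)).
exists (maxn n1 n2) => g' [<-|hg].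
- by have := @TT_mono n1 (maxn n1 n2 - n1) g h1; rewrite subnKC // leq_maxl.
- by have := @TT_mono n2 (maxn n1 n2 - n2) g' (h2 _ hg); rewrite subnKC // leq_maxr.
Qed.

Definition chk (t : seq C) :=
  all id (map (fun d => has id (map (fun e => incl E d e) t))
               (flatten (map (fun p => succ p.1 p.2) (prs t (enum Sig))))).
Definition outs (t : seq C) :=
  flatten (map (fun c => if all id (map (fun e => if incl E c e then incl E e c else true) t)
                         then [:: c] else [::]) t).

Lemma eval_round n : ev (round Sig cx n) = if chk (TT n) then Some (outs (TT n)) else None.
Proof.
rewrite /round /chk /outs ?eval_bind -/(TT n) ?eval_mapM /= ?eval_bind ?eval_mapM.
have -> : [seq ev (mbind (mapM (fun e => incM Sig x0 e) (TT n)) (fun bs => MRet Sig C (has id bs)))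
    | x0 <- flatten [seq succ x0.1 x0.2 | x0 <- prs (TT n) (enum Sig)]] =
   [seq has id [seq incl E d e | e <- TT n] | d <- flatten [seq succ p.1 p.2 | p <- prs (TT n) (enum Sig)]].
  by apply: eq_map => d /=; rewrite eval_bind /= eval_mapM.
case: ifP => // _ /=; rewrite eval_bind eval_mapM /=; congr (Some (flatten _)).
apply: eq_map => c /=; rewrite eval_bind eval_mapM /=.
congr (if all id _ then _ else _); apply: eq_map => e /=.
by rewrite /implM /=; case: (incl E c e).
Qed.

Lemma all_id_map {T} (f : T -> bool) l : all id (map f l) <-> forall y, inlist y l -> f y.
Proof. by rewrite all_map; apply: all_inlist. Qed.
Lemma has_id_map {T} (f : T -> bool) l : has id (map f l) <-> exists y, inlist y l /\ f y.
Proof. by rewrite has_map; apply: has_inlist. Qed.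

Lemma cover_of G : (exists e, inlist e G /\ den e x) ->
  (forall g, inlist g G -> forall a d, inlist d (succ g a) -> exists e, inlist e G /\ sub (den d) (den e)) ->
  forall y, DD y -> exists g, inlist g G /\ den g y.
Proof.
move=> [e [he ex]] hc.
have hdc g : down_closed le (den g) by case: (den_ideal E g) => _ [].
have hr : forall w y z, stepw step w y z -> (exists g, inlist g G /\ den g y) ->
    exists g, inlist g G /\ den g z.
  elim=> [|a w IH] y z /=; first by move=> ->.
  move=> [v [sv hw]] [g [hg gy]]; apply: (IH v z hw).
  have [d [hd dv]] := succ_cover (ex_intro _ y (conj gy sv)).
  have [f [hf sf]] := hc g hg a d hd; by exists f; split=> //; apply: sf.
move=> y [r [[w hw] yr]].
have [g [hg gr]] := hr w x r hw (ex_intro _ e (conj he ex)).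
by exists g; split=> //; apply: hdc gr yr.
Qed.

Lemma den_dc c : down_closed le (den c). Proof. by case: (den_ideal E c) => _ []. Qed.

Lemma in_outs t d : inlist d (outs t) <-> inlist d t /\
   (forall e, inlist e t -> (if incl E d e then incl E e d else true)).
Proof.
rewrite /outs inlist_flatten; split.
- case=> s [/inlist_map [c [hc ->]]]; case: ifP => [/all_id_map h [<-|[]]|_ []].
  by split.
- case=> hd h; exists [:: d]; split; last by left.
  apply/inlist_map; exists d; split=> //; rewrite ifT //; exact/all_id_map.
Qed.

Lemma round_sound n out : ev (round Sig cx n) = Some out -> codes_idecomp le den DD out.
Proof.
rewrite eval_round; case: ifP => // hchk [<-].
set t := TT n.
have hcov : forall y, DD y -> exists g, inlist g t /\ den g y.
  apply: cover_of.
  - exists cx; split; first by apply: cx_TT.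
    by apply/(Hcx x); apply: (le_refl HV).
  - move=> g hg a d hd.
    have /has_id_map [e [he ie]] := proj1 (all_id_map _ _) hchk d
      (proj2 (inlist_flatten _ _) (ex_intro _ (succ g a) (conj (proj2 (inlist_map _ _ _)
         (ex_intro _ (g, a) (conj (prs_in hg (mem_inlist (mem_enum Sig a))) erefl))) hd))).
    by exists e; split=> //; apply/(inclP E).
have tA c : inlist c t -> sub (den c) DD by move=> hc; apply: inA_DD; apply: TT_A hc.
have prime J : ideal le J -> sub J DD -> exists e, inlist e t /\ sub J (den e).
  move=> Ji JD; apply: prime_list Ji _ _ => //; first by move=> e _; apply: den_dc.
  by move=> y /JD /hcov.
split.
- move=> d /in_outs [hd hmax]; split; first by apply: den_ideal.
  split; first by apply: tA.
  move=> J Ji dJ JD; have [e [he Je]] := prime J Ji JD.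
  have := hmax e he; have -> : incl E d e = true by apply/(inclP E) => y /dJ /Je.
  by move/(inclP E) => ed y /Je /ed.
- move=> I [Ii [ID Imax]].
  have [e [he Ie]] := prime I Ii ID.
  have [m [hm [em mmax]]] := @list_max _ (fun c d => sub (den c) (den d)) t
     (fun _ _ h => h) (fun _ _ _ h1 h2 y hy => h2 _ (h1 _ hy)) e (ex_intro _ e (conj he (fun _ h => h))).
  exists m; split.
  + apply/in_outs; split=> // f hf; case: ifP => // /(inclP E) mf.
    by apply/(inclP E); apply: mmax.
  + move=> y; split; last by move=> Iy; apply: em; apply: Ie.
    by apply: (Imax (den m) (den_ideal E m)); [move=> z /Ie /em| apply: tA].
Qed.

Lemma round_event : exists N, ev (round Sig cx N) <> None.
Proof.
have [G [hA hG]] := cover_exists.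
have [N hN] := list_TT hA.
exists N; rewrite eval_round ifT //.
apply/all_id_map => d /inlist_flatten [s [/inlist_map [p [hp ->]] hd]].
have [h1 _] := prs_inv hp.
have hdA : inA d := As (TT_A h1) hd.
have [g [hg dg]] : exists g, inlist g G /\ sub (den d) (den g).
  apply: prime_list (den_ideal E d) _ _; first by move=> e _; apply: den_dc.
  by move=> y /(inA_DD hdA) /hG.
apply/has_id_map; exists g; split; first by apply: hN.
by apply/(inclP E).
Qed.

End Codes.

Theorem theorem12 :
  (* one uniform algorithm computing the ideal decomposition of down(Post*(x)),
     from a code of the ideal down(x) *)
  (exists P : forall (Sig : finType) (C : Type), C -> prog Sig C (seq C),
     forall (X : Type) (Sig : finType) (step : Sig -> X -> X -> Prop)
            (le : X -> X -> Prop),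
       very_wsts step le ->
       forall (C : Type) (E : effective step le C) (x : X) (cx : C),
         seteq (den E cx) (fun y => le y x) ->
         exists r, runs (incl E) (succ E) (accel E) (P Sig C cx) r /\
                   codes_idecomp le (den E) (dc le (reach step x)) r)
  /\
  (* in particular coverability is decidable *)
  (exists Q : forall (Sig : finType) (C : Type), C -> C -> prog Sig C bool,
     forall (X : Type) (Sig : finType) (step : Sig -> X -> X -> Prop)
            (le : X -> X -> Prop),
       very_wsts step le ->
       forall (C : Type) (E : effective step le C) (x y : X) (cx cy : C),
         seteq (den E cx) (fun z => le z x) ->
         seteq (den E cy) (fun z => le z y) ->
         exists b, runs (incl E) (succ E) (accel E) (Q Sig C cx cy) b /\
                   (b = true <-> exists z, le y z /\ reach step x z)).
Proof.
split.
- exists (fun Sig C cx => @run Sig C cx (seq C) (@Ret Sig C (seq C)) 0 (round Sig cx 0)).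
  move=> X Sig step le HV C E x cx Hcx.
  apply: runs_loop.
  + move=> n out h; exists out; split; first by constructor.
    exact: (round_sound HV Hcx h).
  + exact: (round_event HV Hcx).
- exists (fun Sig C cx cy => @run Sig C cx bool
     (fun out => emb (mapM (fun d => incM Sig cy d) out) (fun bs => Ret (has id bs))) 0 (round Sig cx 0)).
  move=> X Sig step le HV C E x y cx cy Hcx Hcy.
  apply: runs_loop; last by exact: (round_event HV Hcx).
  move=> n out h; have [hc1 hc2] := round_sound HV Hcx h.
  exists (has id (map (fun d => incl E cy d) out)); split.
  + by apply: runs_emb; rewrite eval_mapM /=; constructor.
  + split.
    * case/has_id_map => d [hd /(inclP E) cd].
      have [_ [dD _]] := hc1 d hd.
      have [r [hr yr]] := dD y (cd y (proj2 (Hcy y) (le_refl HV y))).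
      by exists r.
    * case=> r [yr hr].
      have [M [HM My]] := dec_exists (wqoX HV) (@dc_dc _ _ _ _ HV (reach step x))
         (ex_intro _ r (conj hr yr)).
      have [d [hd ed]] := hc2 M HM.
      apply/has_id_map; exists d; split=> //; apply/(inclP E) => z /(Hcy z) zy.
      case: (den_ideal E d) => _ [hdc _]; exact: (hdc _ _ (proj2 (ed y) My) zy).
Qed.
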